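(* For all $b,b'\in\overline{\mathbb{Q}}\setminus\{0,1\}$ and any choices of nonzero logarithms $\ln b,\ln b'$ used to define $b^x$ and $b'^x$, one has $EL^{(b)}=EL^{(b')}$.
   Context: For $b\in\mathbb{C}\setminus\{0,1\}$ fix a value $\ln b$ (nonzero) of the logarithm and define $b^x:=e^{x\ln b}$. For $S\subseteq\mathbb{C}$ let $b^{S}=\{b^x:x\in S\}$ and $\mathrm{Log}_b(S)=\{w: b^w\in S\}$. $\overline{F}$ is the algebraic closure in $\mathbb{C}$ of a field $F$; $\overline{\mathbb{Q}}$ is the field of algebraic numbers. Define $EL_0:=\mathbb{Q}$, $EL_n:=\overline{EL_{n-1}\big(b^{EL_{n-1}},\mathrm{Log}_b(EL_{n-1})\big)}$, $EL^{(b)}:=\bigcup_{n\ge0}EL_n$; equivalently the smallest algebraically closed subfield $F\subseteq\mathbb{C}$ with $x\in F\iff b^x\in F$. *)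

(* Defs.v *)
From HB Require Import structures.
From mathcomp Require Import all_boot all_order all_algebra.
From mathcomp Require Import all_classical all_reals.
From mathcomp.analysis Require Import sequences exp trigo.
From mathcomp Require Import complex.
Set Implicit Arguments. Unset Strict Implicit. Unset Printing Implicit Defensive.
Import Order.TTheory GRing.Theory Num.Theory.
Local Open Scope ring_scope.
Local Open Scope complex_scope.

Definition cexp (R : realType) (z : R[i]) : R[i] :=
  let: a +i* b := z in (expR a * cos b) +i* (expR a * sin b).

(* b^x := e^(x ln b), for a fixed chosen logarithm lnb of b *)
Definition cpow (R : realType) (lnb x : R[i]) : R[i] := cexp (x * lnb).

Definition is_algebraic (R : realType) (z : R[i]) : Prop :=
  exists p : {poly rat}, p != 0 /\ root (map_poly ratr p) z.

Definition is_subfield (R : realType) (F : R[i] -> Prop) : Prop :=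
  [/\ F 1,
      (forall x y, F x -> F y -> F (x - y)),
      (forall x y, F x -> F y -> F (x * y)) &
      (forall x, F x -> x != 0 -> F x^-1)].

Definition is_alg_closed_in_C (R : realType) (F : R[i] -> Prop) : Prop :=
  forall (p : {poly R[i]}) (z : R[i]),
    p != 0 -> (forall i, F p`_i) -> root p z -> F z.

Definition exp_log_closed (R : realType) (lnb : R[i]) (F : R[i] -> Prop) : Prop :=
  forall x, F x <-> F (cpow lnb x).

(* EL^(b): the smallest algebraically closed subfield F of C with
   x \in F <-> b^x \in F, i.e. the intersection of all such subfields *)
Definition EL (R : realType) (lnb : R[i]) : R[i] -> Prop :=
  fun z => forall F : R[i] -> Prop,
    is_subfield F -> is_alg_closed_in_C F -> exp_log_closed lnb F -> F z.

(* Main.v *)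
Require Import Defs.
From HB Require Import structures.
From mathcomp Require Import all_boot all_order all_algebra.
From mathcomp Require Import all_classical all_reals.
From mathcomp Require Import complex.
Import GRing.Theory Num.Theory.
Local Open Scope ring_scope.

Section Aux.
Variable R : realType.
Variable F : R[i] -> Prop.
Implicit Types x y : R[i].
Hypothesis hF : is_subfield F.

Lemma F0 : F 0.
Proof. case: hF => h1 hB _ _; by rewrite -(subrr 1); apply: hB. Qed.

Lemma FN (x : R[i]) : F x -> F (- x).
Proof. case: hF => h1 hB _ _ hx; rewrite -sub0r; exact: (hB _ _ F0 hx). Qed.

Lemma FD x y : F x -> F y -> F (x + y).
Proof. case: hF => h1 hB _ _ hx hy; by have := hB _ _ hx (FN _ hy); rewrite opprK. Qed.

Lemma Fnat n : F n%:R.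
Proof.
case: hF => h1 _ _ _.
elim: n => [|n IH]; first exact: F0.
by rewrite mulrS; apply: FD.
Qed.

Lemma Fint z : F z%:~R.
Proof.
case: z => n; first exact: Fnat.
rewrite NegzE mulrNz; apply: FN; exact: Fnat.
Qed.

Lemma Frat q : F (ratr q).
Proof.
case: hF => _ _ hM hV.
rewrite /ratr; apply: hM; first exact: Fint.
have [->|nz] := eqVneq ((denq q)%:~R : R[i]) 0; first by rewrite invr0; exact: F0.
by apply: hV => //; exact: Fint.
Qed.

Lemma Falg z : is_alg_closed_in_C F -> is_algebraic z -> F z.
Proof.
move=> hC [p [p0 rp]].
apply: (hC _ _ _ _ rp).
  by rewrite map_poly_eq0.
move=> i; rewrite coef_map /=; exact: Frat.
Qed.

Lemma transfer (lnb lnb' b' : R[i]) :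
  is_alg_closed_in_C F -> exp_log_closed lnb F ->
  is_algebraic b' -> cexp lnb' = b' -> lnb != 0 -> lnb' != 0 ->
  exp_log_closed lnb' F.
Proof.
move=> hC hE ha hb l0 l0' x.
case: (hF) => _ _ hM hV.
set c := lnb' / lnb.
have Fc : F c.
  apply/hE; rewrite /cpow /c divfK // hb; exact: Falg.
have c0 : c != 0 by rewrite mulf_neq0 // invr_eq0.
have -> : cpow lnb' x = cpow lnb (x * c).
  by rewrite /cpow /c -mulrA divfK.
rewrite -hE; split => h; first exact: hM.
by rewrite -(mulfK c0 x); apply: hM => //; apply: hV.
Qed.
End Aux.

Theorem mainTheorem3 (R : realType) (b b' lnb lnb' : R[i]) :
  is_algebraic b -> b != 0 -> b != 1 ->
  is_algebraic b' -> b' != 0 -> b' != 1 ->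
  lnb != 0 -> cexp lnb = b ->
  lnb' != 0 -> cexp lnb' = b' ->
  EL lnb = EL lnb'.
Proof.
move=> ha _ _ ha' _ _ l0 hb l0' hb'.
apply: funext => z; apply: propext; split => hz G hS hC hE.
- apply: (hz G hS hC); exact: (@transfer R G hS lnb' lnb b hC hE ha hb l0' l0).
- apply: (hz G hS hC); exact: (@transfer R G hS lnb lnb' b' hC hE ha' hb' l0 l0').
Qed.
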